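(* Consider the following strict partial orders on $P_f(\mathbb{N}^+)$: $A\prec_{gen}B$ iff $A=\emptyset$ and $B\neq\emptyset$; $A\prec_{BFS}B$ iff $umin(A)>umin(B)$; $A\prec_{DFS}B$ iff $umax(A)<umax(B)$; $A\prec_{MNS}B$ iff $A\subsetneq B$; $A\prec_{MCS}B$ iff $|A|<|B|$; $A\prec_{LBFS}B$ iff $umin(B-A)<umin(A-B)$; $A\prec_{LDFS}B$ iff $umax(A-B)<umax(B-A)$. Say that search $S'$ extends search $S$ if for all $A,B$, $A\prec_S B$ implies $A\prec_{S'}B$ (equivalently, for every finite graph $G$ every $\mathrm{TBLS}$-ordering of $G$ for $\prec_{S'}$ is a $\mathrm{TBLS}$-ordering of $G$ for $\prec_S$). Then: BFS, DFS and MNS each extend Generic search ($\prec_{gen}$); LBFS extends BFS; LDFS extends DFS; LBFS, LDFS and MCS each extend MNS.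
   Context: $P_f(\mathbb{N}^+)$ is the set of finite subsets of positive integers; $umin(A)=\min A$ for $A\neq\emptyset$ and $umin(\emptyset)=\infty$; $umax(A)=\max A$ for $A\neq\emptyset$ and $umax(\emptyset)=0$. Given a finite graph $G=(V,E)$ with $n$ vertices, a strict partial order $\prec$ on $P_f(\mathbb{N}^+)$ and an ordering $\tau$ of $V$, $\mathrm{TBLS}(G,\prec,\tau)$ is the procedure: set $label(v)=\emptyset$ for every $v$; for $i=1,\dots,n$: let Eligible be the set of unnumbered vertices $x$ such that there is no unnumbered vertex $y$ with $label(x)\prec label(y)$; let $v$ be the first vertex of Eligible in $\tau$; set $\sigma(i)=v$ ($v$ becomes numbered); for every unnumbered neighbour $w$ of $v$ replace $label(w)$ by $label(w)\cup\{i\}$; output $\sigma$. A TBLS-ordering of $G$ for $\prec$ is any output $\mathrm{TBLS}(G,\prec,\tau)$ over all orderings $\tau$ of $V$. *)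

(* Defs.v *)
From HB Require Import structures.
From mathcomp Require Import all_boot finmap.
Set Implicit Arguments.
Unset Strict Implicit.
Unset Printing Implicit Defensive.
Local Open Scope fset_scope.

(* Elements of P_f(N^+) are represented as finite sets of nats {fset nat}
   all of whose elements are positive (see [posset]). *)
Definition posset (A : {fset nat}) : Prop := forall x, x \in A -> (0 < x)%N.

(* N ∪ {∞}: [None] stands for ∞. *)
Definition ltI (a b : option nat) : bool :=
  match a, b with
  | Some x, Some y => (x < y)%N
  | Some _, None => true
  | None, _ => false
  end.

(* umin A = min A for A nonempty, ∞ for A empty. *)
Definition umin (A : {fset nat}) : option nat :=
  if A == fset0 then None
  else Some (foldr minn (head 0 (enum_fset A)) (enum_fset A)).

(* umax A = max A for A nonempty, 0 for A empty. *)
Definition umax (A : {fset nat}) : nat := \max_(x <- enum_fset A) x.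

Definition prec_gen  (A B : {fset nat}) : bool := (A == fset0) && (B != fset0).
Definition prec_BFS  (A B : {fset nat}) : bool := ltI (umin B) (umin A).
Definition prec_DFS  (A B : {fset nat}) : bool := (umax A < umax B)%N.
Definition prec_MNS  (A B : {fset nat}) : bool := A `<` B.
Definition prec_MCS  (A B : {fset nat}) : bool := (#|` A| < #|` B|)%N.
Definition prec_LBFS (A B : {fset nat}) : bool := ltI (umin (B `\` A)) (umin (A `\` B)).
Definition prec_LDFS (A B : {fset nat}) : bool := (umax (A `\` B) < umax (B `\` A))%N.

Definition extends (S S' : {fset nat} -> {fset nat} -> bool) : Prop :=
  forall A B : {fset nat}, posset A -> posset B -> S A B -> S' A B.

(* Main.v *)
Require Import Defs.
From mathcomp Require Import all_boot finmap.
Local Open Scope fset_scope.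

Lemma foldr_min_le (h : nat) (s : seq nat) x : x \in s -> foldr minn h s <= x.
Proof.
elim: s => //= y s IH; rewrite in_cons => /orP [/eqP -> | /IH H].
  by rewrite geq_minl.
by rewrite geq_min H orbT.
Qed.

Lemma foldr_min_in (h : nat) (s : seq nat) : foldr minn h s \in h :: s.
Proof.
elim: s => [|y s IH] /=; first by rewrite inE.
rewrite /minn; case: ifP => _; rewrite !inE ?eqxx ?orbT //.
move: IH; rewrite inE => /orP [->|->]; by rewrite ?orbT.
Qed.

Lemma umin0 {A : {fset nat}} : A = fset0 -> umin A = None.
Proof. by move=> ->; rewrite /umin eqxx. Qed.

Lemma uminP {A : {fset nat}} : A != fset0 ->
  exists m, umin A = Some m /\ m \in A /\ forall x, x \in A -> m <= x.
Proof.
move=> nz; rewrite /umin (negbTE nz).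
eexists; split; first reflexivity.
split; last by move=> x xA; apply: foldr_min_le.
have := foldr_min_in (head 0 (enum_fset A)) (enum_fset A).
have hin : head 0 (enum_fset A) \in enum_fset A.
  case E: (enum_fset A) => [|y s] /=; last by rewrite inE eqxx.
  exfalso; move/negP: nz; apply; apply/eqP/fsetP => x.
  by rewrite inE -[x \in A]/(x \in enum_fset A) E.
rewrite inE => /orP [/eqP ->|] //.
Qed.

Lemma umax_le (A : {fset nat}) x : x \in A -> x <= umax A.
Proof.
rewrite /umax -[x \in A]/(x \in enum_fset A).
elim: (enum_fset A) => [|y s IH] //; rewrite big_cons inE => /orP [/eqP ->|/IH H].
  exact: leq_maxl.
exact: leq_trans H (leq_maxr _ _).
Qed.

Lemma umax_in (A : {fset nat}) : umax A = 0 \/ umax A \in A.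
Proof.
rewrite /umax -[_ \in A]/(_ \in enum_fset A).
elim: (enum_fset A) => [|y s IH]; first by rewrite big_nil; left.
rewrite big_cons /maxn; case: ifP => _.
  case: IH => [->|H]; [left|right] => //; by rewrite inE H orbT.
by right; rewrite inE eqxx.
Qed.

Lemma umax_lub (A : {fset nat}) m : (forall x, x \in A -> x <= m) -> umax A <= m.
Proof.
move=> H; case: (umax_in A) => [->|]; first by [].
exact: H.
Qed.

Lemma umax0 : umax fset0 = 0.
Proof. by apply/eqP; rewrite -leqn0; apply: umax_lub => x; rewrite inE. Qed.

Theorem theorem8 :
  extends prec_gen prec_BFS /\
  extends prec_gen prec_DFS /\
  extends prec_gen prec_MNS /\
  extends prec_BFS prec_LBFS /\
  extends prec_DFS prec_LDFS /\
  extends prec_MNS prec_LBFS /\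
  extends prec_MNS prec_LDFS /\
  extends prec_MNS prec_MCS.
Proof.
split; [|split; [|split; [|split; [|split; [|split; [|split]]]]]].
- move=> A B _ _ /andP [/eqP A0 Bn]; rewrite /prec_BFS (umin0 A0).
  by have [m [-> _]] := uminP Bn.
- move=> A B _ pB /andP [/eqP A0 Bn]; rewrite /prec_DFS A0.
  have [m [_ [mB _]]] := uminP Bn.
  rewrite umax0.
  by apply: (leq_trans (pB _ mB)); apply: umax_le.
- move=> A B _ _ /andP [/eqP A0 Bn]; rewrite /prec_MNS A0.
  by rewrite fproper0.
- move=> A B _ _; rewrite /prec_BFS /prec_LBFS.
  have [B0|Bn] := eqVneq B fset0; first by rewrite (umin0 B0).
  have [b [-> [bB bmin]]] := uminP Bn => H.
  have Ab : forall x, x \in A -> b < x.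
    move=> x xA; have An : A != fset0 by apply/negP=> /eqP A0; rewrite A0 inE in xA.
    have [a [Ea [_ amin]]] := uminP An; rewrite Ea /= in H.
    exact: leq_trans H (amin _ xA).
  have bBA : b \in B `\` A.
    by rewrite inE bB andbT; apply/negP => /Ab; rewrite ltnn.
  have BAn : B `\` A != fset0 by apply/negP=> /eqP E; rewrite E inE in bBA.
  have [c [-> [_ cmin]]] := uminP BAn.
  have [AB0|ABn] := eqVneq (A `\` B) fset0; first by rewrite (umin0 AB0).
  have [d [-> [dA _]]] := uminP ABn; rewrite /=.
  move: dA; rewrite inE => /andP [_ /Ab]; exact: leq_ltn_trans (cmin _ bBA).
- move=> A B _ _; rewrite /prec_DFS /prec_LDFS => H.
  case: (umax_in B) => [E|mB]; first by rewrite E in H.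
  have mA : umax B \notin A by apply/negP => /umax_le; rewrite leqNgt H.
  apply: (@leq_ltn_trans (umax A)).
    by apply: umax_lub => x; rewrite inE => /andP [_ /umax_le].
  by apply: (leq_trans H); apply: umax_le; rewrite inE mA mB.
- move=> A B _ _; rewrite /prec_MNS /prec_LBFS fproperE => /andP [sAB nBA].
  have -> : A `\` B = fset0 by apply/eqP; rewrite fsetD_eq0.
  have BAn0 : B `\` A != fset0 by rewrite fsetD_eq0.
  have [x [_ [xBA _]]] := uminP BAn0.
  have xB : x \in B by move: xBA; rewrite inE => /andP [].
  have BAn : B `\` A != fset0 by apply/negP=> /eqP E; rewrite E inE in xBA.
  by have [c [-> _]] := uminP BAn; rewrite umin0.
- move=> A B _ pB; rewrite /prec_MNS /prec_LDFS fproperE => /andP [sAB nBA].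
  have -> : A `\` B = fset0 by apply/eqP; rewrite fsetD_eq0.
  have BAn0 : B `\` A != fset0 by rewrite fsetD_eq0.
  have [x [_ [xBA _]]] := uminP BAn0.
  have xB : x \in B by move: xBA; rewrite inE => /andP [].
  rewrite umax0.
  by apply: (leq_trans (pB _ xB)); apply: umax_le.
- move=> A B _ _; rewrite /prec_MNS /prec_MCS; exact: fproper_ltn_card.
Qed.
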